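(* Assume Condition (C) and $\lambda/2<h<\lambda$. If $\eta\in\mathcal X$ contains either a cluster of pluses having a convex side of length $l_1<\frac{2J}{\lambda+h}$, or a cluster of minuses having a convex side of length $l_2<\frac{2J}{\lambda-h}$, then $V_\eta<2J$.
   Context: Let $\Lambda=\{1,\dots,L\}^2$, $\mathcal X=\{-1,0,+1\}^\Lambda$, $\partial^-\Lambda$ the sites of $\Lambda$ with a nearest neighbour outside $\Lambda$. Hamiltonian: $H(\eta)=\frac J2\sum_{i,j\in\Lambda,|i-j|=1}[\eta(i)-\eta(j)]^2+J\sum_{i\in\partial^-\Lambda}\sum_{j\notin\Lambda,|i-j|=1}\eta(i)^2-\lambda\sum_{i}\eta(i)^2-h\sum_i\eta(i)$. Condition (C): $J$ sufficiently large compared to $\lambda,h>0$; $L>(2J/(\lambda-h))^3$; none of $\tfrac{2J}{\lambda+h},\tfrac{2J}{\lambda-h},\tfrac{2J+\lambda-h}{\lambda+h},\tfrac{J+\lambda+h}{h}$ is an integer. Clusters of pluses (resp. minuses) of $\eta$ are the maximal connected components of the union of the closed unit squares centred at sites with spin $+1$ (resp. $-1$). The boundary of a cluster is a union of maximal straight segments (sides); the length of a side is the number of unit edges it contains. A corner of the boundary is convex if the interior angle of the cluster there is a right angle, concave otherwise; a side is convex if both its endpoints are convex corners. $V_\eta=\Phi(\eta,\{\zeta:H(\zeta)<H(\eta)\})-H(\eta)$, where $\Phi(\eta,A)$ is the minimum over paths (sequences of single-site changes) from $\eta$ to $A$ of the max of $H$ along the path. *)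

(* Defs.v *)
(* Blume-Capel model on the box Lambda = {0..L-1}^2
   (a harmless shift of {1..L}^2). *)
From HB Require Import structures.
From mathcomp Require Import all_boot all_order all_algebra.
From mathcomp Require Import reals.
Set Implicit Arguments. Unset Strict Implicit. Unset Printing Implicit Defensive.
Import Order.TTheory GRing.Theory Num.Theory.
Local Open Scope ring_scope.

Inductive spin := Minus | Zero | Plus.

Definition spin_eqb (a b : spin) : bool :=
  match a, b with
  | Minus, Minus | Zero, Zero | Plus, Plus => true
  | _, _ => false
  end.

Lemma spin_eqP : Equality.axiom spin_eqb.
Proof. by case; case; constructor. Qed.

HB.instance Definition _ := hasDecEq.Build spin spin_eqP.

Definition sval {R : nzRingType} (s : spin) : R :=
  match s with Minus => -1 | Zero => 0 | Plus => 1 end.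

Definition site (L : nat) := ('I_L * 'I_L)%type.
Definition config (L : nat) := site L -> spin.

Definition nn (L : nat) (i j : site L) : bool :=
  (((i.1 : nat) == j.1) && (((i.2 : nat) == (j.2 : nat).+1) || ((j.2 : nat) == (i.2 : nat).+1)))
  || (((i.2 : nat) == j.2) && (((i.1 : nat) == (j.1 : nat).+1) || ((j.1 : nat) == (i.1 : nat).+1))).

(* number of nearest neighbours of i lying outside Lambda
   (nonzero exactly for i in the inner boundary of Lambda) *)
Definition n_out (L : nat) (i : site L) : nat :=
  ((i.1 : nat) == 0%N) + ((i.1 : nat) == L.-1) + ((i.2 : nat) == 0%N) + ((i.2 : nat) == L.-1).

Definition Ham {R : fieldType} (J lam h : R) (L : nat) (eta : config L) : R :=
  J / 2%:R * (\sum_(i : site L) \sum_(j : site L | nn i j) (sval (eta i) - sval (eta j)) ^+ 2)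
  + J * (\sum_(i : site L) (n_out i)%:R * sval (eta i) ^+ 2)
  - lam * (\sum_(i : site L) sval (eta i) ^+ 2)
  - h * (\sum_(i : site L) sval (eta i)).

(* closed unit squares centred at i and j intersect iff the sites are at
   sup-distance <= 1 *)
Definition sq_touch (L : nat) (i j : site L) : bool :=
  [&& (i.1 <= (j.1 : nat).+1)%N, (j.1 <= (i.1 : nat).+1)%N,
      (i.2 <= (j.2 : nat).+1)%N & (j.2 <= (i.2 : nat).+1)%N].

Definition spin_rel (L : nat) (eta : config L) (sigma : spin) : rel (site L) :=
  fun i j => [&& eta i == sigma, eta j == sigma & sq_touch i j].

(* C is a cluster of spins sigma (sigma = Plus / Minus) of eta:
   a connected component of the union of the squares of sigma-sites *)
Definition is_cluster (L : nat) (eta : config L) (sigma : spin) (C : {set site L}) : Prop :=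
  exists x : site L, eta x = sigma /\ C = [set y | connect (spin_rel eta sigma) x y].

Definition inC (L : nat) (C : {set site L}) (p : int * int) : bool :=
  [exists s in C, (Posz s.1 == p.1) && (Posz s.2 == p.2)].

Definition axis_dirs : seq (int * int) := [:: (1, 0); (-1, 0); (0, 1); (0, -1)].

Definition shift (p d : int * int) (k : int) : int * int :=
  (p.1 + k * d.1, p.2 + k * d.2).

(* A side of the boundary of C: the sites p, p+d, ..., p+(l-1)d lie in C, the
   sites across the (outward) normal n do not; the unit edges separating them
   form a straight boundary segment of length l, maximal in direction +-d. *)
Definition is_side (L : nat) (C : {set site L}) (p d n : int * int) (l : nat) : Prop :=
  [/\ [&& d \in axis_dirs, n \in axis_dirs & d.1 * n.1 + d.2 * n.2 == 0],
      (0 < l)%N,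
      (forall k : nat, (k < l)%N ->
          inC C (shift p d k%:Z) && ~~ inC C (shift (shift p d k%:Z) n 1)),
      ~~ (inC C (shift p d (-1)) && ~~ inC C (shift (shift p d (-1)) n 1))
    & ~~ (inC C (shift p d l%:Z) && ~~ inC C (shift (shift p d l%:Z) n 1))].

(* both endpoints are convex corners (interior angle of C is a right angle):
   the boundary turns towards the outward normal, i.e. the square adjacent to
   the end of the side, on the line of the side, is not in C *)
Definition convex_side (L : nat) (C : {set site L}) (p d n : int * int) (l : nat) : Prop :=
  is_side C p d n l /\ ~~ inC C (shift p d (-1)) /\ ~~ inC C (shift p d l%:Z).

Definition has_convex_side_of_length (L : nat) (C : {set site L}) (l : nat) : Prop :=
  exists p d n, convex_side C p d n l.

Definition single_flip (L : nat) (a b : config L) : Prop :=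
  exists s : site L, a s <> b s /\ forall t, t <> s -> a t = b t.

Fixpoint is_path (L : nat) (a : config L) (p : seq (config L)) : Prop :=
  match p with
  | [::] => True
  | b :: q => single_flip a b /\ is_path b q
  end.

Definition path_max {R : realDomainType} (L : nat) (f : config L -> R)
  (a : config L) (p : seq (config L)) : R :=
  foldr Num.max (f a) (map f p).

(* "V_eta < c" where V_eta = Phi(eta, {zeta : H zeta < H eta}) - H eta and
   Phi(eta, A) = min over paths from eta to A of the max of H along the path:
   min_{paths} (max H) - H eta < c  iff  some such path has max H - H eta < c. *)
Definition V_lt {R : realFieldType} (J lam h : R) (L : nat) (eta : config L) (c : R) : Prop :=
  exists p : seq (config L),
    [/\ is_path eta p,
        Ham J lam h (last eta p) < Ham J lam h eta
      & path_max (@Ham R J lam h L) eta p - Ham J lam h eta < c].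

Definition not_integer {R : nzRingType} (x : R) : Prop := forall z : int, x <> z%:~R.

(* Main.v *)
Require Import Defs.
From HB Require Import structures.
From mathcomp Require Import all_boot all_order all_algebra.
From mathcomp Require Import reals.
From mathcomp Require Import zify ring lra.
Set Implicit Arguments. Unset Strict Implicit. Unset Printing Implicit Defensive.
Import Order.TTheory GRing.Theory Num.Theory.
Local Open Scope ring_scope.

Notation sv := Defs.sval.
Section S.
Local Open Scope ring_scope.
Variable L : nat.
Definition crd (s : site L) : int * int := (Posz s.1, Posz s.2).
Definition e1 : int*int := (1,0).
Definition e2 : int*int := (-1,0).
Definition e3 : int*int := (0,1).
Definition e4 : int*int := (0,-1).
Definition nbp (s : site L) (e : int * int) := shift (crd s) e 1.

Lemma crd_inj : injective crd.
Proof. move=> [[a ha] [b hb]] [[c hc] [d hd]] [] /= e1 e2.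
subst. by rewrite (bool_irrelevance ha hc) (bool_irrelevance hb hd). Qed.

Lemma conv1 (s j : site L) : (crd j == nbp s (1,0)) = (j.1 == (s.1 : nat).+1 :> nat) && (j.2 == s.2 :> nat).
Proof.
rewrite /crd /nbp /shift /= xpair_eqE.
apply/idP/idP => [/andP [/eqP h1 /eqP h2]|/andP [/eqP h1 /eqP h2]]; apply/andP; split; apply/eqP; lia.
Qed.
Lemma conv2 (s j : site L) : (crd j == nbp s (-1,0)) = ((s.1 : nat) == (j.1 : nat).+1) && (j.2 == s.2 :> nat).
Proof.
rewrite /crd /nbp /shift /= xpair_eqE.
apply/idP/idP => [/andP [/eqP h1 /eqP h2]|/andP [/eqP h1 /eqP h2]]; apply/andP; split; apply/eqP; lia.
Qed.
Lemma conv3 (s j : site L) : (crd j == nbp s (0,1)) = (j.1 == s.1 :> nat) && (j.2 == (s.2 : nat).+1 :> nat).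
Proof.
rewrite /crd /nbp /shift /= xpair_eqE.
apply/idP/idP => [/andP [/eqP h1 /eqP h2]|/andP [/eqP h1 /eqP h2]]; apply/andP; split; apply/eqP; lia.
Qed.
Lemma conv4 (s j : site L) : (crd j == nbp s (0,-1)) = (j.1 == s.1 :> nat) && ((s.2 : nat) == (j.2 : nat).+1).
Proof.
rewrite /crd /nbp /shift /= xpair_eqE.
apply/idP/idP => [/andP [/eqP h1 /eqP h2]|/andP [/eqP h1 /eqP h2]]; apply/andP; split; apply/eqP; lia.
Qed.

Lemma nn_split (s j : site L) : (nn s j : nat) =
  ((crd j == nbp s e1) + (crd j == nbp s e2) + (crd j == nbp s e3) + (crd j == nbp s e4))%N.
Proof.
rewrite conv1 conv2 conv3 conv4 /nn.
move: (s.1 : nat) (s.2 : nat) (j.1 : nat) (j.2 : nat) => a b c d.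
by do ![case: eqP => ?] => //=; lia.
Qed.

Lemma pick_sum (R : nzRingType) (p : int * int) (g : site L -> R) :
  \sum_(j | crd j == p) g j = if [pick j | crd j == p] is Some j then g j else 0.
Proof.
case: pickP => [j /eqP hj|h]; last by rewrite big_pred0.
rewrite (big_pred1 j) // => t /=; apply/eqP/eqP => [/eqP|->//].
by rewrite -hj => /eqP /crd_inj.
Qed.

Lemma ex1 (s : site L) : [exists j, crd j == nbp s e1] = ((s.1 : nat).+1 < L)%N.
Proof.
apply/existsP/idP => [[j]|h]; first by rewrite conv1 => /andP [/eqP <- _].
by exists (Ordinal h, s.2); rewrite conv1 /= !eqxx.
Qed.
Lemma ex2 (s : site L) : [exists j, crd j == nbp s e2] = (0 < (s.1 : nat))%N.
Proof.
apply/existsP/idP => [[j]|h]; first by rewrite conv2 => /andP [/eqP -> _].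
have h' : ((s.1 : nat).-1 < L)%N by case: s h => [[a ha] b] /= h; lia.
by exists (Ordinal h', s.2); rewrite conv2 /= prednK // !eqxx.
Qed.
Lemma ex3 (s : site L) : [exists j, crd j == nbp s e3] = ((s.2 : nat).+1 < L)%N.
Proof.
apply/existsP/idP => [[j]|h]; first by rewrite conv3 => /andP [_ /eqP <-].
by exists (s.1, Ordinal h); rewrite conv3 /= !eqxx.
Qed.
Lemma ex4 (s : site L) : [exists j, crd j == nbp s e4] = (0 < (s.2 : nat))%N.
Proof.
apply/existsP/idP => [[j]|h]; first by rewrite conv4 => /andP [_ /eqP ->].
have h' : ((s.2 : nat).-1 < L)%N by case: s h => [a [b hb]] /= h; lia.
by exists (s.1, Ordinal h'); rewrite conv4 /= prednK // !eqxx.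
Qed.

Lemma nout_ex (s : site L) : (n_out s + [exists j, crd j == nbp s e1] + [exists j, crd j == nbp s e2]
   + [exists j, crd j == nbp s e3] + [exists j, crd j == nbp s e4])%N = 4%N.
Proof.
rewrite ex1 ex2 ex3 ex4 /n_out.
case: s => [[a ha] [b hb]] /=.
have p1 (x : nat) : ((x == 0%N) + (0 < x) = 1)%N by case: x.
have p2 (x : nat) : (x < L -> (x == L.-1) + (x.+1 < L) = 1)%N.
  move: (L) => L0 hx; case: L0 hx => [|L'] //= hx; case: eqP => [->|hne]; lia.
have := p1 a; have := p1 b; have := p2 _ ha; have := p2 _ hb. lia.
Qed.

Lemma nn_irr (s : site L) : nn s s = false.
Proof. rewrite /nn; move: (s.1 : nat) (s.2 : nat) => a b. by do ![case: eqP => ?] => //=; lia. Qed.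

Lemma nn_sym1 (s j : site L) : nn s j -> nn j s.
Proof. rewrite /nn => /orP [/andP [/eqP h1 /orP [/eqP h2|/eqP h2]] | /andP [/eqP h1 /orP [/eqP h2|/eqP h2]]]; apply/orP; [left|left|right|right]; by rewrite h1 h2 !eqxx ?orbT. Qed.
Lemma nn_sym (s j : site L) : nn s j = nn j s.
Proof. by apply/idP/idP => /nn_sym1. Qed.

Definition dirs := [:: e1; e2; e3; e4].

Definition ptval {R : nzRingType} (a : config L) (p : int * int) : R :=
  \sum_(j | crd j == p) sv (a j).

Lemma sum_diff1 (R : nzRingType) (F : site L -> spin -> R) (a b : config L) s :
  (forall t, t != s -> b t = a t) ->
  \sum_i F i (b i) - \sum_i F i (a i) = F s (b s) - F s (a s).
Proof.
move=> hb; rewrite (bigD1 s) //= [X in _ - X](bigD1 s) //=.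
rewrite (eq_bigr (fun i => F i (a i))) => [|i /hb -> //].
by rewrite opprD addrACA subrr addr0.
Qed.

Lemma sum_cond (R : nzRingType) (P : pred (site L)) (G : site L -> R) :
  \sum_(j | P j) G j = \sum_j (P j)%:R * G j.
Proof. rewrite big_mkcond; apply: eq_bigr => j _; by case: (P j); rewrite ?mul1r ?mul0r. Qed.

Lemma sum_nn (R : nzRingType) (s : site L) (G : site L -> R) :
  \sum_(j | nn s j) G j = \sum_(e <- dirs) \sum_(j | crd j == nbp s e) G j.
Proof.
rewrite /dirs !big_cons big_nil addr0 (sum_cond (nn s)).
rewrite (sum_cond (fun j => crd j == nbp s e1)) (sum_cond (fun j => crd j == nbp s e2)).
rewrite (sum_cond (fun j => crd j == nbp s e3)) (sum_cond (fun j => crd j == nbp s e4)).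
rewrite -!big_split /=.
apply: eq_bigr => j _; by rewrite nn_split !natrD !mulrDl !addrA.
Qed.

Lemma pick_lin (R : nzRingType) (a : config L) (p : int * int) (K M : R) :
  \sum_(j | crd j == p) (K - M * sv (a j)) = ([exists j, crd j == p])%:R * K - M * (ptval a p : R).
Proof.
rewrite /ptval !pick_sum; case: pickP => [j hj|h].
  have -> : [exists j, crd j == p] by apply/existsP; exists j.
  by rewrite mul1r.
have -> : [exists j, crd j == p] = false by apply/existsP => -[j]; rewrite h.
by rewrite mul0r mulr0 subr0.
Qed.

Lemma double_diff (R : nzRingType) (a b : config L) s :
  (forall t, t != s -> b t = a t) ->
  \sum_i \sum_(j | nn i j) (sv (b i) - sv (b j) : R) ^+ 2
  - \sum_i \sum_(j | nn i j) (sv (a i) - sv (a j) : R) ^+ 2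
  = 2%:R * \sum_(j | nn s j) ((sv (b s) - sv (a j)) ^+ 2 - (sv (a s) - sv (a j)) ^+ 2).
Proof.
move=> hb.
set D := fun i j => (sv (b i) - sv (b j) : R) ^+ 2 - (sv (a i) - sv (a j)) ^+ 2.
have hD : forall i j, i != s -> j != s -> D i j = 0.
  by move=> i j hi hj; rewrite /D (hb _ hi) (hb _ hj) subrr.
rewrite -sumrB (eq_bigr (fun i => \sum_(j | nn i j) D i j)); last by move=> i _; rewrite sumrB.
rewrite (bigD1 s) //=.
have -> : \sum_(i | i != s) \sum_(j | nn i j) D i j = \sum_(i | nn s i) D i s.
  rewrite (eq_bigr (fun i => (nn i s)%:R * D i s)).
    rewrite [RHS]sum_cond [RHS](bigD1 s) //= nn_irr mul0r add0r.
    by apply: eq_bigr => i _; rewrite nn_sym.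
  move=> i hi; rewrite sum_cond (bigD1 s) //= big1 ?addr0 // => j hj.
  by rewrite hD ?mulr0.
set X := \sum_(j | nn s j) _.
have -> : \sum_(i | nn s i) D i s = X.
  apply: eq_bigr => j hj.
  have hjs : j != s by apply: contraTneq hj => ->; rewrite nn_irr.
  have sq (x y : R) : (x - y) ^+ 2 = (y - x) ^+ 2 by rewrite -sqrrN opprB.
  by rewrite /D (hb _ hjs); congr (_ - _); apply: sq.
rewrite -mulr2n mulr_natl; congr (_ *+ 2); apply: eq_bigr => j hj.
have hjs : j != s by apply: contraTneq hj => ->; rewrite nn_irr.
by rewrite /D (hb _ hjs).
Qed.

Lemma Ham_flip (R : realFieldType) (J lam h : R) (a b : config L) (s : site L) :
  (forall t, t != s -> b t = a t) ->
  Ham J lam h b - Ham J lam h a =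
   J * (4%:R * (sv (b s) ^+ 2 - sv (a s) ^+ 2)
        - 2%:R * (sv (b s) - sv (a s)) * \sum_(e <- dirs) (ptval a (nbp s e) : R))
   - lam * (sv (b s) ^+ 2 - sv (a s) ^+ 2) - h * (sv (b s) - sv (a s)).
Proof.
move=> hb.
have hA := double_diff R hb.
have hB := sum_diff1 (fun i x => (n_out i)%:R * (sv x : R) ^+ 2) hb.
have hC := sum_diff1 (fun i x => (sv x : R) ^+ 2) hb.
have hD := sum_diff1 (fun i x => (sv x : R)) hb.
simpl in hB, hC, hD.
set K := sv (b s) ^+ 2 - sv (a s) ^+ 2 : R.
set M := 2%:R * (sv (b s) - sv (a s)) : R.
have hS : \sum_(j | nn s j) ((sv (b s) - sv (a j)) ^+ 2 - (sv (a s) - sv (a j)) ^+ 2)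
   = \sum_(e <- dirs) (([exists j, crd j == nbp s e])%:R * K - M * (ptval a (nbp s e) : R)).
  rewrite sum_nn; apply: eq_bigr => e _; rewrite -pick_lin; apply: eq_bigr => j _.
  rewrite /K /M; ring.
rewrite hS /dirs !big_cons big_nil !addr0 in hA.
rewrite /dirs !big_cons big_nil !addr0.
have hN := nout_ex s.
have hN' : (n_out s)%:R = 4%:R - ([exists j, crd j == nbp s e1]%:R + [exists j, crd j == nbp s e2]%:R
   + [exists j, crd j == nbp s e3]%:R + [exists j, crd j == nbp s e4]%:R) :> R.
  by rewrite -hN !natrD; ring.
rewrite /Ham.
rewrite (_ : forall x1 x2 y1 y2 z1 z2 w1 w2 : R, (J/2%:R * x1 + J*y1 - lam*z1 - h*w1) - (J/2%:R*x2 + J*y2 - lam*z2 - h*w2) = J/2%:R*(x1-x2) + J*(y1-y2) - lam*(z1-z2) - h*(w1-w2)); last by move=> *; ring.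
rewrite hA hB hC hD hN' /K /M.
field.
by [].
Qed.
End S.


Definition neg (e : int * int) : int * int := (- e.1, - e.2).

Lemma sum_dirs (R : comNzRingType) (F : int * int -> R) (d n : int * int) :
  d \in axis_dirs -> n \in axis_dirs -> d.1 * n.1 + d.2 * n.2 == 0 ->
  \sum_(e <- dirs) F e = F d + F (neg d) + F n + F (neg n).
Proof.
rewrite /dirs /neg !big_cons big_nil addr0 !inE.
case/or4P => /eqP -> ; case/or4P => /eqP -> //= _; rewrite ?oppr0 ?opprK /e1 /e2 /e3 /e4.
all: ring.
Qed.


Lemma sval_bound (R : realFieldType) (sigma t : spin) :
  sigma != Zero -> sv sigma * sv t <= 1 :> R.
Proof. by case: sigma; case: t => //= _; lra. Qed.

Lemma sval_bound0 (R : realFieldType) (sigma t : spin) :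
  sigma != Zero -> t != sigma -> sv sigma * sv t <= 0 :> R.
Proof. by case: sigma; case: t => //= _ _; lra. Qed.

Lemma ptval_le1 (R : realFieldType) L (a : config L) sigma p :
  sigma != Zero -> sv sigma * (ptval a p : R) <= 1.
Proof.
move=> hs; rewrite /ptval pick_sum; case: pickP => [j _|_]; first exact: sval_bound.
by rewrite mulr0 ler01.
Qed.

Lemma ptval_le0 (R : realFieldType) L (a : config L) sigma p :
  sigma != Zero -> (forall j, crd j = p -> a j != sigma) -> sv sigma * (ptval a p : R) <= 0.
Proof.
move=> hs hj; rewrite /ptval pick_sum; case: pickP => [j /eqP /hj hj'|_]; first exact: sval_bound0.
by rewrite mulr0.
Qed.

Lemma crd_inC L (C : {set site L}) t : t \in C -> inC C (crd t).
Proof. by move=> ht; apply/existsP; exists t; rewrite ht /= !eqxx. Qed.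

Lemma inC_crd L (C : {set site L}) q : inC C q -> exists2 t, t \in C & crd t = q.
Proof.
case: q => q1 q2 /existsP [t /andP [ht /andP [/eqP h1 /eqP h2]]].
by exists t => //; rewrite /crd h1 h2.
Qed.

Section Cl.
Variables (L : nat) (eta : config L) (sigma : spin) (x : site L) (C : {set site L}).
Hypothesis hsig : sigma != Zero.
Hypothesis hx : eta x = sigma.
Hypothesis hC : C = [set y | connect (spin_rel eta sigma) x y].

Lemma C_sig y : y \in C -> eta y = sigma.
Proof.
rewrite hC inE => /connectP [pth hp ->].
elim: pth x hx hp => [|z pth IH] u hu //= /andP [/and3P [_ /eqP hz _] hp].
exact: IH hz hp.
Qed.

Lemma adj t e j : t \in C -> e \in axis_dirs -> ~~ inC C (nbp t e) ->
   crd j = nbp t e -> eta j != sigma.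
Proof.
move=> ht he hn hj; apply/negP => /eqP hej.
have htouch : sq_touch t j.
  move: hj he; rewrite /nbp /shift /crd; case: e hn => [e1' e2'] _.
  rewrite !inE => [[h1 h2]] /or4P [] /eqP [he1 he2]; subst e1' e2'; apply/and4P; split; lia.
have hjC : j \in C.
  have hxt := ht; move: hxt; rewrite hC !inE => hxt.
  apply: connect_trans hxt (connect1 _).
  by rewrite /spin_rel hej (C_sig ht) !eqxx htouch.
by move: hn; rewrite -hj crd_inC.
Qed.

Lemma neg_dirs e : e \in axis_dirs -> neg e \in axis_dirs.
Proof. by rewrite /neg !inE => /or4P [] /eqP ->. Qed.

Lemma shift_neg (p d : int * int) (a : int) : shift (shift p d a) (neg d) 1 = shift p d (a - 1).
Proof. by case: p d => [p1 p2] [d1 d2]; rewrite /shift /neg /=; congr pair; ring. Qed.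
Lemma shift_pos (p d : int * int) (a : int) : shift (shift p d a) d 1 = shift p d (a + 1).
Proof. by case: p d => [p1 p2] [d1 d2]; rewrite /shift /neg /=; congr pair; ring. Qed.

Variables (p d n : int * int) (l : nat).
Hypothesis hcs : convex_side C p d n l.

Definition q k := odflt x [pick t in C | crd t == shift p d k%:Z].

Lemma q_spec k : (k < l)%N -> q k \in C /\ crd (q k) = shift p d k%:Z.
Proof.
move=> hkl; case: hcs => [[_ _ hk _ _] _].
have /andP [/inC_crd [t ht htc] _] := hk k hkl.
rewrite /q; case: pickP => [u /andP [hu /eqP hu2]|/(_ t)] //=.
by rewrite ht htc eqxx.
Qed.

Lemma shift_inj k m : d \in axis_dirs -> shift p d k%:Z = shift p d m%:Z -> k = m.
Proof. case: p => p1 p2; rewrite /shift !inE => /or4P [] /eqP -> /= [h1 h2]; lia. Qed.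

Fixpoint cfg k : config L := if k is k'.+1 then (fun t => if t == q k' then Zero else cfg k' t) else eta.

Lemma cfg_or k t : cfg k t = eta t \/ cfg k t = Zero.
Proof. elim: k => [|k IH] /=; first by left. by case: eqP => _; [right|]. Qed.

Lemma cfg_zero m k : (m < k)%N -> cfg k (q m) = Zero.
Proof.
elim: k => // k IH; rewrite ltnS leq_eqVlt => /orP [/eqP ->|/IH hm] /=; first by rewrite eqxx.
by case: eqP.
Qed.

Lemma cfg_q k : (k < l)%N -> cfg k (q k) = sigma.
Proof.
move=> hkl; have [hqC hqc] := q_spec hkl.
have hd : d \in axis_dirs by case: hcs => [[/and3P [] ]].
suff : forall m, (m <= k)%N -> cfg m (q k) = eta (q k) by move/(_ k (leqnn k)) ->; exact: C_sig.
elim => // m IH hm /=; rewrite IH ?(ltnW hm) //; case: eqP => // heq.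
have [_ hqm] := q_spec (ltn_trans hm hkl).
have e : shift p d k%:Z = shift p d m%:Z by rewrite -hqc -hqm heq.
have hkm := shift_inj hd e.
by move: hm; rewrite hkm ltnn.
Qed.

Lemma notsig_cfg k P : (forall j, crd j = P -> eta j != sigma) -> forall j, crd j = P -> cfg k j != sigma.
Proof.
move=> H j hj; case: (cfg_or k j) => ->; first exact: H.
by rewrite eq_sym.
Qed.

Variables (R : realFieldType) (J lam h : R).
Let sg : R := sv sigma.
Let c : R := lam + h * sg.
Let H := @Ham R J lam h L.

Lemma step_formula k : (k < l)%N ->
  H (cfg k.+1) - H (cfg k) =
  J * (- 4%:R + 2%:R * (sg * \sum_(e <- dirs) (ptval (cfg k) (nbp (q k) e) : R))) + c.
Proof.
move=> hkl; rewrite /H (@Ham_flip _ _ _ _ _ _ _ (q k)); last by move=> t /negbTE /= ->.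
rewrite /= eqxx cfg_q //.
have hsg : (sv sigma : R) ^+ 2 = 1 by move: hsig; case: (sigma) => //= _; rewrite ?sqrrN expr1n.
rewrite hsg /c /sg /=; ring.
Qed.

Lemma step_bound k : (k < l)%N -> 0 <= J ->
  H (cfg k.+1) - H (cfg k) <= c - (if k.+1 == l then 2%:R * J else 0).
Proof.
move=> hkl hJ; rewrite step_formula //.
case: hcs => [[/and3P [hd hn hdn] hl hk hm1 hml] [hcm1 hcl]].
rewrite (sum_dirs (fun e => ptval (cfg k) (nbp (q k) e)) hd hn hdn) /=.
have [hqC hqc] := q_spec hkl.
have hnb e : nbp (q k) e = shift (shift p d k%:Z) e 1 by rewrite /nbp hqc.
have b2 : sg * ptval (cfg k) (nbp (q k) (neg d)) <= 0.
  apply: ptval_le0 => //; case: k hkl hqC hqc hnb => [|k'] hkl hqC hqc hnb.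
    apply: notsig_cfg => j hj; apply: (adj hqC (neg_dirs hd) _ hj).
    by rewrite hnb shift_neg sub0r.
  move=> j hj; have [_ hqk'] := q_spec (ltnW hkl).
  have -> : j = q k'.
    apply: crd_inj; rewrite hj hqk' hnb shift_neg; congr shift; lia.
  by rewrite cfg_zero // eq_sym.
have b3 : sg * ptval (cfg k) (nbp (q k) n) <= 0.
  apply: ptval_le0 => //; apply: notsig_cfg => j hj.
  apply: (adj hqC hn _ hj); rewrite hnb; by have /andP [] := hk k hkl.
have b4 : sg * ptval (cfg k) (nbp (q k) (neg n)) <= 1 by apply: ptval_le1.
have b1 : sg * ptval (cfg k) (nbp (q k) d) <= (if k.+1 == l then 0 else 1).
  case: eqP => hkl'; last by apply: ptval_le1.
  apply: ptval_le0 => //; apply: notsig_cfg => j hj; apply: (adj hqC hd _ hj).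
  by rewrite hnb shift_pos (_ : k%:Z + 1 = l%:Z) //; lia.
rewrite /c; case: (k.+1 == l) b1 => b1; nra.
Qed.

Lemma ham_cfg k : (k <= l)%N -> 0 <= J ->
  H (cfg k) - H eta <= k%:R * c - (if k == l then 2%:R * J else 0).
Proof.
move=> hkl hJ; have hl : (0 < l)%N by case: hcs => [[]].
elim: k hkl => [|k IH] hkl.
  have -> : (0 == l) = false by apply/eqP => h0; move: hl; rewrite -h0.
  by rewrite subrr mul0r subr0.
have hk : (k < l)%N by [].
have := step_bound hk hJ; have := IH (ltnW hk).
have -> : (k == l) = false by apply/eqP => h0; move: hk; rewrite h0 ltnn.
rewrite -[k.+1]addn1 natrD addn1 => h1 h2.
have -> : H (cfg k.+1) - H eta = (H (cfg k.+1) - H (cfg k)) + (H (cfg k) - H eta) by ring.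
lra.
Qed.

Lemma path_from i m : (i + m <= l)%N -> is_path (cfg i) (map cfg (iota i.+1 m)).
Proof.
elim: m i => [|m IH] i him //=; split; last by apply: IH; rewrite addSnnS.
exists (q i); split.
  by rewrite /= eqxx cfg_q; [apply/eqP | lia].
by move=> t /eqP /negbTE /= ->.
Qed.

Lemma last_from i m : last (cfg i) (map cfg (iota i.+1 m)) = cfg (i + m).
Proof. elim: m i => [|m IH] i /=; first by rewrite addn0. by rewrite -addSnnS; apply: IH. Qed.

Lemma foldr_max_lt (B x0 : R) (s : seq R) : x0 < B -> all (fun y => y < B) s -> foldr Num.max x0 s < B.
Proof. elim: s => [|y s IH] //= hx0 /andP [hy hs]; by rewrite gt_max hy IH. Qed.

Lemma main_gen : 0 < c -> l%:R < 2%:R * J / c -> V_lt J lam h eta (2%:R * J).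
Proof.
move=> hc hlc; rewrite ltr_pdivlMr // in hlc.
have hl : (0 < l)%N by case: hcs => [[]].
have hl1 : 1 <= (l%:R : R) by rewrite ler1n.
have hJ : 0 < J by nra.
exists (map cfg (iota 1 l)); split.
- by apply: path_from.
- rewrite -/H (last_from 0 l) add0n.
  have := ham_cfg (leqnn l) (ltW hJ); rewrite eqxx; nra.
- rewrite /path_max -map_comp -/H.
  suff : foldr Num.max (H eta) [seq (H \o cfg) i | i <- iota 1 l] < H eta + 2%:R * J by lra.
  apply: foldr_max_lt; first by lra.
  apply/allP => y /mapP [k]; rewrite mem_iota => /andP [hk1 hk2] -> /=.
  have hkl : (k <= l)%N by lia.
  have := ham_cfg hkl (ltW hJ).
  have hk : (k%:R : R) <= l%:R by rewrite ler_nat.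
  case: (k == l) => h1; nra.
Qed.
End Cl.

Unset Implicit Arguments.
Set Strict Implicit.
Theorem lemma4p3 (R : realType) (lam h : R) :
  0 < h -> lam / 2%:R < h -> h < lam ->
  exists J0 : R, forall (J : R) (L : nat),
    J0 < J ->
    ((2%:R * J / (lam - h)) ^+ 3 < L%:R) ->
    not_integer (2%:R * J / (lam + h)) ->
    not_integer (2%:R * J / (lam - h)) ->
    not_integer ((2%:R * J + lam - h) / (lam + h)) ->
    not_integer ((J + lam + h) / h) ->
    forall eta : config L,
      (exists (C : {set site L}) (l1 : nat),
          is_cluster eta Plus C /\ has_convex_side_of_length C l1 /\
          l1%:R < 2%:R * J / (lam + h))
      \/
      (exists (C : {set site L}) (l2 : nat),
          is_cluster eta Minus C /\ has_convex_side_of_length C l2 /\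
          l2%:R < 2%:R * J / (lam - h)) ->
      V_lt J lam h eta (2%:R * J).
Proof.
move=> hh hlh hhl; exists 0 => J L _ _ _ _ _ _ eta.
case=> [[C [l1 [[x0 [hx0 hC]] [[p [d [n hcs]]] hlt]]]]|[C [l2 [[x0 [hx0 hC]] [[p [d [n hcs]]] hlt]]]]].
- apply: (main_gen (sigma := Plus) (x := x0) (C := C) _ hx0 hC hcs) => //=; rewrite mulr1 //; lra.
- apply: (main_gen (sigma := Minus) (x := x0) (C := C) _ hx0 hC hcs) => //=; rewrite mulrN1 //; lra.
Qed.
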